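(* Fix $p\in[0,1]$ and a sequence $\{\gamma_n\}$ with $\gamma_n\in[0,\frac12]$, $\gamma_n/\sqrt{\log n/n}\to\infty$ and $\gamma_n\to0$. For each $n$ let $\mathcal G_n(p)$ be the set of all graphs $G=(\mathcal V,\mathcal E)$ with $n$ vertices such that (1) every vertex has degree between $pn(1-\gamma_n)$ and $pn(1+\gamma_n)$, and (2) for all $u,v\in\mathcal V$, $|\mathcal N(u)\cap\mathcal N(v)|/|\mathcal N(v)|\ge p(1-\gamma_n)$. Let $G$ be an Erdős–Rényi random graph with $n$ vertices and edge probability $p$. Then there is a sequence $\theta_n\to0$ such that for every $n$, $\mathbb P(G\in\mathcal G_n(p))\ge1-\theta_n$.
   Context: $\mathcal N(v)$ denotes the set of neighbors of $v$ in $G$. *)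

(* Defs.v *)
From HB Require Import structures.
From mathcomp Require Import all_boot all_order all_algebra.
From mathcomp Require Import all_classical all_reals all_analysis.
Set Implicit Arguments. Unset Strict Implicit. Unset Printing Implicit Defensive.
Import Order.TTheory GRing.Theory Num.Theory.
Local Open Scope ring_scope.

(* A simple graph on vertex set 'I_n is represented by its edge set:
   a set of 2-element subsets of 'I_n. *)
Definition two_sets (n : nat) : {set {set 'I_n}} := [set e : {set 'I_n} | #|e| == 2%N].

Definition is_graph (n : nat) (E : {set {set 'I_n}}) : bool := E \subset two_sets n.

Definition nbhd (n : nat) (E : {set {set 'I_n}}) (v : 'I_n) : {set 'I_n} :=
  [set u | [set u; v] \in E].

Definition in_Gnp (R : realType) (p gam : R) (n : nat) (E : {set {set 'I_n}}) : bool :=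
  [forall v : 'I_n,
     (p * n%:R * (1 - gam) <= #|nbhd E v|%:R) && (#|nbhd E v|%:R <= p * n%:R * (1 + gam))]
  && [forall u : 'I_n, forall v : 'I_n,
     (#|nbhd E u :&: nbhd E v|%:R / #|nbhd E v|%:R >= p * (1 - gam))].

(* Erdos-Renyi G(n,p): each of the 'C(n,2) possible edges present independently
   with probability p; probability of a given graph with edge set E. *)
Definition ER_weight (R : realType) (p : R) (n : nat) (E : {set {set 'I_n}}) : R :=
  p ^+ #|E| * (1 - p) ^+ ('C(n, 2) - #|E|).

Definition ER_prob (R : realType) (p : R) (n : nat) (A : {set {set 'I_n}} -> bool) : R :=
  \sum_(E : {set {set 'I_n}} | is_graph E && A E) ER_weight p E.

(* Main.v *)
Require Import Defs.
From HB Require Import structures.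
From mathcomp Require Import all_boot all_order all_algebra.
From mathcomp Require Import all_classical all_reals all_analysis.
From mathcomp Require Import ring lra.
Import Order.TTheory GRing.Theory Num.Theory.
Import numFieldNormedType.Exports.
Import mathcomp.boot.fintype mathcomp.boot.finset.
Local Open Scope ring_scope.
Local Notation fset0 := (@finset.set0 _).

Section Ex.
Variables (R : realType) (T : finType) (p : R).
Hypothesis hp : 0 <= p <= 1.
Implicit Types (U S E : {set T}) (f g : {set T} -> R).

Definition Ex (U : {set T}) (f : {set T} -> R) : R :=
  \sum_(E : {set T} | E \subset U) p ^+ #|E| * (1 - p) ^+ (#|U| - #|E|) * f E.

Lemma Ex_ext U f g : (forall E, E \subset U -> f E = g E) -> Ex U f = Ex U g.
Proof. by move=> H; apply: eq_bigr => E /H ->. Qed.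

Lemma w_ge0 U E : 0 <= p ^+ #|E| * (1 - p) ^+ (#|U| - #|E|).
Proof. case/andP: hp => h0 h1; apply: mulr_ge0; apply: exprn_ge0; lra. Qed.

Lemma Ex_le U f g : (forall E, E \subset U -> f E <= g E) -> Ex U f <= Ex U g.
Proof. move=> H; apply: ler_sum => E /H fg; apply: ler_wpM2l => //; exact: w_ge0. Qed.

Lemma Ex_add U f g : Ex U (fun E => f E + g E) = Ex U f + Ex U g.
Proof. rewrite /Ex -big_split /=; apply: eq_bigr => E _; by rewrite mulrDr. Qed.

Lemma Ex_scale U c f : Ex U (fun E => c * f E) = c * Ex U f.
Proof. rewrite /Ex mulr_sumr; apply: eq_bigr => E _; by rewrite mulrCA. Qed.

Lemma Ex_opp U f : Ex U (fun E => - f E) = - Ex U f.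
Proof. rewrite -mulN1r -Ex_scale; apply: Ex_ext => E _; by rewrite mulN1r. Qed.

Lemma Ex_sum (I : finType) U (F : I -> {set T} -> R) :
  Ex U (fun E => \sum_i F i E) = \sum_i Ex U (F i).
Proof.
rewrite /Ex; under eq_bigr do rewrite mulr_sumr.
by rewrite exchange_big.
Qed.

Lemma Ex_zero U : Ex U (fun _ => 0) = 0.
Proof. by rewrite /Ex big1 // => E _; rewrite mulr0. Qed.

Lemma Ex0 f : Ex fset0 f = f fset0.
Proof.
rewrite /Ex (big_pred1 fset0) ?cards0 ?mul1r //.
by move=> E; rewrite finset.subset0.
Qed.

Lemma Ex_rec U x f : x \in U ->
  Ex U f = p * Ex (U :\ x) (fun E => f (x |: E)) + (1 - p) * Ex (U :\ x) f.
Proof.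
move=> xU; rewrite /Ex (bigID (fun E => x \in E)) /=.
have cU : #|U| = #|U :\ x|.+1 by rewrite (cardsD1 x U) xU.
congr (_ + _).
  rewrite (reindex_onto (fun E => x |: E) (fun E => E :\ x)) /=; last first.
    by move=> E /andP[_ xE]; rewrite setD1K.
  have hc : forall E, ((x |: E \subset U) && (x \in x |: E) && ((x |: E) :\ x == E)) = (E \subset U :\ x).
    move=> E; apply/idP/idP.
      case/andP=> /andP[sU _] /eqP eE; rewrite -eE.
      exact: setSD.
    move=> sE; have xE : x \notin E by apply/negP => /(subsetP sE); rewrite !inE eqxx.
    rewrite setU11 setU1K // eqxx andbT andbT subUset sub1set xU /=.
    by apply: subset_trans sE (subsetDl _ _).
  rewrite mulr_sumr; apply: eq_big => E; first exact: hc.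
  rewrite hc.
  move=> sE; have xE : x \notin E by apply/negP => /(subsetP sE); rewrite !inE eqxx.
  rewrite cardsU1 xE cU subSS exprS; ring.
rewrite mulr_sumr; apply: eq_big => E.
  by rewrite subsetD1.
move=> /andP[sE xE].
have le : (#|E| <= #|U :\ x|)%N by apply: subset_leq_card; rewrite subsetD1 sE.
rewrite cU subSn // exprS; ring.
Qed.

Lemma Ex1 U : Ex U (fun _ => 1) = 1.
Proof.
have [n] := ubnP #|U|; elim: n U => // n IH U ltU.
case: (set_0Vmem U) => [->|[x xU]]; first by rewrite Ex0.
rewrite (Ex_rec _ _ _ xU) !IH; first ring.
all: by rewrite (cardsD1 x U) xU in ltU.
Qed.

Lemma Ex_ind U x : x \in U -> Ex U (fun E => (x \in E)%:R) = p.
Proof.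
move=> xU; rewrite (Ex_rec _ _ _ xU).
rewrite (@Ex_ext _ (fun E => (x \in x |: E)%:R) (fun _ => 1)); last by move=> E _; rewrite setU11.
rewrite Ex1.
rewrite (@Ex_ext _ (fun E => (x \in E)%:R) (fun _ => 0)); last first.
  by move=> E sE; have -> : x \in E = false by apply/negP => /(subsetP sE); rewrite !inE eqxx.
rewrite Ex_zero; ring.
Qed.

Lemma Ex_mul U S f g : (forall E, f E = f (E :&: S)) -> (forall E, g E = g (E :\: S)) ->
  Ex U (fun E => f E * g E) = Ex U f * Ex U g.
Proof.
have [n] := ubnP #|U|; elim: n U f g => // n IH U f g ltU hf hg.
case: (set_0Vmem U) => [->|[x xU]]; first by rewrite !Ex0.
have lt' : (#|U :\ x| < n)%N by rewrite (cardsD1 x U) xU in ltU.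
rewrite !(Ex_rec _ _ _ xU).
case: (boolP (x \in S)) => xS.
  have gx : forall E, g (x |: E) = g E.
    move=> E; rewrite hg [in RHS]hg; congr g; apply/setP => y; rewrite !inE.
    by case: (y =P x) => [->|_]; rewrite ?xS ?(negbTE xS) /=; by case: (_ \in E); case: (_ \in S).
  rewrite (@Ex_ext _ (fun E => f (x |: E) * g (x |: E)) (fun E => f (x |: E) * g E)); last by move=> E _; rewrite gx.
  rewrite (@Ex_ext _ (fun E => g (x |: E)) (g)); last by move=> E _; rewrite gx.
  rewrite !IH //; first ring.
  move=> E; rewrite hf [in RHS]hf; congr f; apply/setP => y; rewrite !inE.
  by case: (y =P x) => [->|_]; rewrite ?xS ?(negbTE xS) /=; by case: (_ \in E); case: (_ \in S).
have fx : forall E, f (x |: E) = f E.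
  move=> E; rewrite hf [in RHS]hf; congr f; apply/setP => y; rewrite !inE.
  by case: (y =P x) => [->|_]; rewrite ?xS ?(negbTE xS) /=; by case: (_ \in E); case: (_ \in S).
rewrite (@Ex_ext _ (fun E => f (x |: E) * g (x |: E)) (fun E => f E * g (x |: E))); last by move=> E _; rewrite fx.
rewrite (@Ex_ext _ (fun E => f (x |: E)) (f)); last by move=> E _; rewrite fx.
rewrite !IH //; first ring.
move=> E; rewrite hg [in RHS]hg; congr g; apply/setP => y; rewrite !inE.
by case: (y =P x) => [->|_]; rewrite ?xS ?(negbTE xS) /=; by case: (_ \in E); case: (_ \in S).
Qed.


Lemma Ex_ge0 U f : (forall E, E \subset U -> 0 <= f E) -> 0 <= Ex U f.
Proof. by move=> H; rewrite -(Ex_zero U); apply: Ex_le. Qed.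

Lemma Ex_prod (I : eqType) (s : seq I) U (h : I -> {set T} -> R) (S : I -> {set T}) :
  uniq s -> (forall i E, h i E = h i (E :&: S i)) ->
  (forall i j, i != j -> S i :&: S j = fset0) ->
  Ex U (fun E => \prod_(i <- s) h i E) = \prod_(i <- s) Ex U (h i).
Proof.
move=> + hh hd; elim: s => [|i s IH] /=.
  rewrite (@Ex_ext _ _ (fun _ => 1)) => [|E _]; first by rewrite Ex1 big_nil.
  by rewrite big_nil.
move=> /andP[iS us].
rewrite (@Ex_ext _ _ (fun E => h i E * \prod_(j <- s) h j E)); last by move=> E _; rewrite big_cons.
rewrite (@Ex_mul U (S i)) //; first by rewrite big_cons IH.
move=> E; apply: eq_big_seq => j js; rewrite hh [in RHS]hh; congr h.
have ij : i != j by apply/eqP => eij; rewrite eij js in iS.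
apply/setP => y; have /setP/(_ y) := hd i j ij; rewrite !inE.
by case: (y \in E); case: (y \in S i); case: (y \in S j).
Qed.

Lemma Ex_mgf (I : finType) U (phi : I -> {set T} -> bool) (S : I -> {set T}) l :
  (forall i E, phi i E = phi i (E :&: S i)) -> (forall i j, i != j -> S i :&: S j = fset0) ->
  Ex U (fun E => expR (l * (\sum_i (phi i E : nat))%:R))
   <= expR ((expR l - 1) * \sum_i Ex U (fun E => (phi i E)%:R)).
Proof.
move=> hphi hd.
rewrite (@Ex_ext _ _ (fun E => \prod_i (1 + (expR l - 1) * (phi i E)%:R))); last first.
  move=> E _; rewrite natr_sum mulr_sumr expR_sum; apply: eq_bigr => i _.
  by case: (phi i E) => /=; rewrite ?mulr1n ?mulr0n ?mulr1 ?mulr0 ?expR0; ring.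
rewrite (@Ex_prod _ _ U (fun i E => 1 + (expR l - 1) * (phi i E)%:R) S (index_enum_uniq I)); last 2 first.
- by move=> i E /=; rewrite -hphi.
- exact: hd.
rewrite mulr_sumr expR_sum; apply: ler_prod => i _; apply/andP; split.
  apply: Ex_ge0 => E _; have := expR_gt0 l.
  case: (phi i E) => /=; rewrite ?mulr1n ?mulr0n ?mulr1 ?mulr0 ?addr0 //; lra.
rewrite Ex_add Ex1 Ex_scale; exact: expR_ge1Dx.
Qed.

Lemma expR_up (l : R) : 0 <= l <= 2^-1 -> expR l - 1 <= l + 2 * l ^+ 2.
Proof.
move=> /andP[l0 l1].
have h : expR l * (1 - l) <= 1.
  have := expR_ge1Dx (- l); rewrite expRN => h.
  have e0 := expR_gt0 l.
  have : expR l * (1 - l) <= expR l * (expR l)^-1 by apply: ler_wpM2l; [exact: ltW | lra].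
  by rewrite mulfV ?lt0r_neq0.
have e0 := expR_gt0 l.
nra.
Qed.

Lemma expR_lo (l : R) : 0 <= l -> expR (- l) - 1 <= - l + l ^+ 2.
Proof.
move=> l0.
have h : expR (- l) * (1 + l) <= 1.
  have := expR_ge1Dx l => h.
  have e0 := expR_gt0 (- l).
  have : expR (- l) * (1 + l) <= expR (- l) * expR l by apply: ler_wpM2l => //; exact: ltW.
  by rewrite -expRD addNr expR0.
have e0 := expR_gt0 (- l).
nra.
Qed.


Section Tails.
Variables (I : finType) (U : {set T}) (phi : I -> {set T} -> bool) (S : I -> {set T}).
Hypothesis hphi : forall i E, phi i E = phi i (E :&: S i).
Hypothesis hd : forall i j, i != j -> S i :&: S j = fset0.
Let mu := \sum_i Ex U (fun E => (phi i E)%:R).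
Let X E : R := (\sum_i (phi i E : nat))%:R.

Lemma mu_ge0 : 0 <= mu.
Proof. by apply: sumr_ge0 => i _; apply: Ex_ge0 => E _; exact: ler0n. Qed.

Lemma tail_up (M d : R) : mu <= M -> 0 <= d <= 1 ->
  Ex U (fun E => (nat_of_bool (M * (1 + d) <= X E))%:R) <= expR (- (M * d ^+ 2 / 8)).
Proof.
move=> hM /andP[d0 d1].
pose l := d / 4.
have l0 : 0 <= l by rewrite /l; lra.
have le1 : Ex U (fun E => (nat_of_bool (M * (1 + d) <= X E))%:R)
    <= Ex U (fun E => expR (- (l * (M * (1 + d)))) * expR (l * X E)).
  apply: Ex_le => E _; rewrite -expRD.
  case: (boolP (M * (1 + d) <= X E)) => h /=; rewrite ?mulr0n ?mulr1n; last exact: expR_ge0.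
  have : 1 + (- (l * (M * (1 + d))) + l * X E) <= expR (- (l * (M * (1 + d))) + l * X E) by exact: expR_ge1Dx.
  nra.
apply: (le_trans le1); rewrite Ex_scale.
have le2 := @Ex_mgf I U phi S l hphi hd.
have e0 := expR_ge0 (- (l * (M * (1 + d)))).
apply: (le_trans (ler_wpM2l e0 le2)); rewrite -expRD ler_expR.
have hu := expR_up l; have m0 := mu_ge0.
have h1 : (expR l - 1) * mu <= (l + 2 * l ^+ 2) * M.
  have : expR l - 1 <= l + 2 * l ^+ 2 by apply: hu; rewrite /l; lra.
  rewrite -/mu; nra.
rewrite -/mu.
have -> : - (M * d ^+ 2 / 8) = - (l * (M * (1 + d))) + (l + 2 * l ^+ 2) * M by rewrite /l; field.
lra.
Qed.

Lemma tail_lo (M c d : R) : M - c <= mu -> 0 <= c -> 0 <= d <= 1 ->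
  Ex U (fun E => (nat_of_bool (X E <= M * (1 - d)))%:R) <= expR (c - M * d ^+ 2 / 4).
Proof.
move=> hM c0 /andP[d0 d1].
pose l := d / 2.
have l0 : 0 <= l by rewrite /l; lra.
have le1 : Ex U (fun E => (nat_of_bool (X E <= M * (1 - d)))%:R)
    <= Ex U (fun E => expR (l * (M * (1 - d))) * expR ((- l) * X E)).
  apply: Ex_le => E _; rewrite -expRD.
  case: (boolP (X E <= M * (1 - d))) => h /=; rewrite ?mulr0n ?mulr1n; last exact: expR_ge0.
  have : 1 + (l * (M * (1 - d)) + (- l) * X E) <= expR (l * (M * (1 - d)) + (- l) * X E) by exact: expR_ge1Dx.
  nra.
apply: (le_trans le1); rewrite Ex_scale.
have le2 := @Ex_mgf I U phi S (- l) hphi hd.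
have e0 := expR_ge0 (l * (M * (1 - d))).
apply: (le_trans (ler_wpM2l e0 le2)); rewrite -expRD ler_expR.
have m0 := mu_ge0.
have h1 : (expR (- l) - 1) * mu <= (- l + l ^+ 2) * (M - c).
  have : expR (- l) - 1 <= - l + l ^+ 2 by apply: expR_lo.
  have : - l + l ^+ 2 <= 0 by rewrite /l; nra.
  rewrite -/mu; nra.
rewrite -/mu.
have h2 : l * (M * (1 - d)) + (- l + l ^+ 2) * (M - c) = - (M * d ^+ 2 / 4) + c * (l - l ^+ 2) by rewrite /l; field.
have h3 : c * (l - l ^+ 2) <= c by rewrite /l; nra.
lra.
Qed.

End Tails.

End Ex.

Arguments Ex {R T}.
Arguments Ex_ext {R T}. Arguments Ex_le {R T}. Arguments Ex_add {R T}. Arguments Ex_scale {R T}.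
Arguments Ex_opp {R T}. Arguments Ex_sum {R T}. Arguments Ex_zero {R T}. Arguments Ex0 {R T}.
Arguments Ex_rec {R T}. Arguments Ex1 {R T}. Arguments Ex_ind {R T}. Arguments Ex_mul {R T}.
Arguments Ex_ge0 {R T}. Arguments Ex_prod {R T}. Arguments Ex_mgf {R T}. Arguments tail_up {R T}.
Arguments tail_lo {R T}.

Section Graph.
Variables (R : realType) (n : nat) (p : R).
Hypothesis hp : 0 <= p <= 1.
Local Notation U := (two_sets n).
Local Notation T := {set 'I_n}.
Implicit Types (E : {set T}) (u v w : 'I_n).

Lemma ER_Ex (A : {set T} -> bool) : ER_prob p A = Ex p U (fun E => (A E : nat)%:R).
Proof.
rewrite /ER_prob /Ex /is_graph.
have -> : #|U| = 'C(n, 2) by rewrite /two_sets card_draws card_ord.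
rewrite big_mkcondr; apply: eq_bigr => E _; rewrite /ER_weight.
by case: (A E); rewrite ?mulr1 ?mulr0.
Qed.

Lemma inU E x : E \subset U -> x \in E -> #|x| = 2%N.
Proof. by move=> /subsetP sE /sE; rewrite inE => /eqP. Qed.

Lemma set11_notin E v : E \subset U -> ([set v; v] \in E) = false.
Proof.
move=> sE; apply/negP => /(inU _ _ sE); rewrite cards2 eqxx //.
Qed.

Lemma set2_neq (a b c d : 'I_n) : a != b -> a != d -> [set a; c] != [set b; d].
Proof.
move=> ab ad; apply/eqP => e.
have : a \in [set b; d] by rewrite -e set21.
by rewrite !inE (negbTE ab) (negbTE ad).
Qed.

Definition phiD v w E := (w != v) && ([set w; v] \in E).
Definition SD v w : {set T} := if w != v then [set [set w; v]] else fset0.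

Lemma degE E v : E \subset U -> #|nbhd E v| = (\sum_w phiD v w E)%N.
Proof.
move=> sE; rewrite -sum1_card big_mkcond /=; apply: eq_bigr => w _.
rewrite /phiD inE; case: (eqVneq w v) => [->|//]; by rewrite set11_notin.
Qed.

Lemma phiD_loc v w E : phiD v w E = phiD v w (E :&: SD v w).
Proof. by rewrite /phiD /SD; case: (w != v) => //=; rewrite !inE eqxx andbT. Qed.

Lemma SD_disj v w1 w2 : w1 != w2 -> SD v w1 :&: SD v w2 = fset0.
Proof.
move=> w12; rewrite /SD; case: (eqVneq w1 v) => h1; first by rewrite set0I.
case: (eqVneq w2 v) => h2; first by rewrite setI0.
apply/setP => y; rewrite !inE; apply/negP => /andP[/eqP -> /eqP e].
by move: (set2_neq w1 w2 v v w12 h1); rewrite e eqxx.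
Qed.

Lemma ExD v w : Ex p U (fun E => (phiD v w E)%:R) = if w != v then p else 0.
Proof.
rewrite /phiD; case: (eqVneq w v) => h /=.
  by rewrite (@Ex_ext _ _ _ _ _ (fun _ => 0)) ?Ex_zero.
apply: Ex_ind; rewrite inE cards2 h //.
Qed.

Definition phiC u v w E := [&& w != u, w != v, [set w; u] \in E & [set w; v] \in E].
Definition SC u v w : {set T} :=
  if (w != u) && (w != v) then [set [set w; u]; [set w; v]] else fset0.

Lemma codegE E u v : E \subset U -> #|nbhd E u :&: nbhd E v| = (\sum_w phiC u v w E)%N.
Proof.
move=> sE; rewrite -sum1_card big_mkcond /=; apply: eq_bigr => w _.
rewrite /phiC !inE; case: (eqVneq w u) => [->|hu]; first by rewrite set11_notin.
case: (eqVneq w v) => [->|hv]; first by rewrite set11_notin // andbF.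
by [].
Qed.

Lemma phiC_loc u v w E : phiC u v w E = phiC u v w (E :&: SC u v w).
Proof.
rewrite /phiC /SC; case: (w != u); case: (w != v) => //=.
by rewrite !inE !eqxx /= ?orbT ?andbT.
Qed.

Lemma SC_disj u v w1 w2 : w1 != w2 -> SC u v w1 :&: SC u v w2 = fset0.
Proof.
move=> w12; rewrite /SC.
case: (eqVneq w1 u) => h1 /=; first by rewrite set0I.
case: (eqVneq w1 v) => h1' /=; first by rewrite set0I.
case: (eqVneq w2 u) => h2 /=; first by rewrite setI0.
case: (eqVneq w2 v) => h2' /=; first by rewrite setI0.
apply/setP => y; rewrite !inE; apply/negP => /andP[/orP[]/eqP -> /orP[]/eqP e].
- by move: (set2_neq w1 w2 u u w12 h1); rewrite e eqxx.
- by move: (set2_neq w1 w2 u v w12 h1'); rewrite e eqxx.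
- by move: (set2_neq w1 w2 v u w12 h1); rewrite e eqxx.
- by move: (set2_neq w1 w2 v v w12 h1'); rewrite e eqxx.
Qed.

Lemma ExC u v w : u != v ->
  Ex p U (fun E => (phiC u v w E)%:R) = if (w != u) && (w != v) then p * p else 0.
Proof.
move=> uv; rewrite /phiC; case: (eqVneq w u) => h /=.
  by rewrite (@Ex_ext _ _ _ _ _ (fun _ => 0)) ?Ex_zero.
case: (eqVneq w v) => h' /=.
  by rewrite (@Ex_ext _ _ _ _ _ (fun _ => 0)) ?Ex_zero.
have ab : [set w; u] != [set w; v].
  apply/eqP => e; have : u \in [set w; v] by rewrite -e set22.
  by rewrite !inE eq_sym (negbTE h) (negbTE uv).
rewrite (@Ex_ext _ _ _ _ _ (fun E => ([set w; u] \in E)%:R * ([set w; v] \in E)%:R)); last first.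
  by move=> E _; case: ([set w; u] \in E); case: ([set w; v] \in E); rewrite /= ?mulr1 ?mulr0.
rewrite (@Ex_mul _ _ p U [set [set w; u]]).
- by rewrite !Ex_ind // inE cards2 ?h ?h'.
- by move=> E; rewrite !inE eqxx andbT.
- by move=> E; rewrite !inE eq_sym (negbTE ab).
Qed.

End Graph.

Lemma sum_constI (R : realType) (n : nat) (c : R) : \sum_(i < n) c = c *+ n.
Proof. by rewrite sumr_const card_ord. Qed.

Lemma sum_pred1I (R : realType) (n : nat) (v : 'I_n) (c : R) :
  \sum_(w < n) (if w == v then c else 0) = c.
Proof. by rewrite -big_mkcond big_pred1_eq. Qed.

Lemma muD (R : realType) (n : nat) (p : R) (v : 'I_n) :
  \sum_w Ex p (two_sets n) (fun E => (phiD n v w E)%:R) = p * n%:R - p.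
Proof.
under eq_bigr do rewrite ExD.
rewrite -[X in _ - X](@sum_pred1I _ _ v p) mulr_natr -sum_constI -sumrB; apply: eq_bigr => w _.
by case: (eqVneq w v) => _ /=; rewrite ?subr0 ?subrr.
Qed.

Lemma muC (R : realType) (n : nat) (p : R) (u v : 'I_n) : u != v ->
  p ^+ 2 * n%:R - 2 * p ^+ 2 <= \sum_w Ex p (two_sets n) (fun E => (phiC n u v w E)%:R).
Proof.
move=> uv; under eq_bigr do rewrite ExC //.
have -> : p ^+ 2 * n%:R - 2 * p ^+ 2 =
   \sum_(w < n) (p * p - (if w == u then p * p else 0) - (if w == v then p * p else 0)).
  by rewrite !sumrB !sum_pred1I sum_constI -mulr_natr; ring.
apply: ler_sum => w _; have := sqr_ge0 p; rewrite -expr2.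
case: (eqVneq w u) => [->|hu] /=.
  by rewrite (negbTE uv) => h; lra.
case: (eqVneq w v) => [_|hv] /= h; lra.
Qed.

Section Bound.
Variables (R : realType) (p g : R) (n : nat).
Hypothesis hp : 0 <= p <= 1.
Hypothesis hg : 0 <= g <= 2^-1.
Local Notation U := (two_sets n).
Local Notation T := {set 'I_n}.
Implicit Types (E : {set T}) (u v w : 'I_n).

Let e := expR (2 - p ^+ 2 / 72 * n%:R * g ^+ 2).
Let M1 := p * n%:R.
Let M2 := p ^+ 2 * n%:R.

Definition B1 v E := (#|nbhd E v|%:R <= M1 * (1 - g)).
Definition B2 v E := (M1 * (1 + g / 3) <= #|nbhd E v|%:R).
Definition B3 u v E := (u != v) && (#|nbhd E u :&: nbhd E v|%:R <= M2 * (1 - g / 2)).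
Definition bad E : nat := (\sum_v (B1 v E + B2 v E) + \sum_u \sum_v B3 u v E)%N.

Lemma ng_ge0 : 0 <= n%:R * g ^+ 2 :> R.
Proof. by apply: mulr_ge0; [exact: ler0n | exact: sqr_ge0]. Qed.

Lemma EB1 v : Ex p U (fun E => (B1 v E)%:R) <= e.
Proof.
have := @tail_lo R T p hp 'I_n U (phiD n v) (SD n v) (@phiD_loc n v) (@SD_disj n v) M1 p g.
rewrite muD /M1 lexx => /(_ isT); case/andP: hp => p0 p1.
case/andP: hg => g0 g1.
move=> /(_ p0); rewrite g0 /= => /(_ ltac:(lra)) h.
rewrite (@Ex_ext _ _ _ _ _ (fun E => (nat_of_bool ((\sum_w (phiD n v w E : nat))%:R <= M1 * (1 - g)))%:R)); last first.
  by move=> E sE; rewrite /B1 degE.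
apply: (le_trans h); rewrite ler_expR /M1.
have X0 := ng_ge0; have pX : 0 <= p * (n%:R * g ^+ 2) by apply: mulr_ge0.
nra.
Qed.

Lemma EB2 v : Ex p U (fun E => (B2 v E)%:R) <= e.
Proof.
case/andP: hp => p0 p1; case/andP: hg => g0 g1.
have hmu : \sum_w Ex p U (fun E => (phiD n v w E)%:R) <= M1 by rewrite muD /M1; lra.
have := @tail_up R T p hp 'I_n U (phiD n v) (SD n v) (@phiD_loc n v) (@SD_disj n v) M1 (g / 3) hmu.
move=> /(_ ltac:(apply/andP; split; lra)) h.
rewrite (@Ex_ext _ _ _ _ _ (fun E => (nat_of_bool (M1 * (1 + g / 3) <= (\sum_w (phiD n v w E : nat))%:R))%:R)); last first.
  by move=> E sE; rewrite /B2 degE.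
apply: (le_trans h); rewrite ler_expR /M1.
have X0 := ng_ge0; have pX : 0 <= p * (n%:R * g ^+ 2) by apply: mulr_ge0.
nra.
Qed.

Lemma EB3 u v : Ex p U (fun E => (B3 u v E)%:R) <= e.
Proof.
case/andP: hp => p0 p1; case/andP: hg => g0 g1.
case: (eqVneq u v) => [->|uv].
  rewrite (@Ex_ext _ _ _ _ _ (fun _ => 0)); last by move=> E _; rewrite /B3 eqxx.
  by rewrite Ex_zero expR_ge0.
have hmu := @muC R n p u v uv.
have := @tail_lo R T p hp 'I_n U (phiC n u v) (SC n u v) (@phiC_loc n u v) (@SC_disj n u v) M2 (2 * p ^+ 2) (g / 2) hmu.
have p20 : 0 <= p ^+ 2 by exact: sqr_ge0.
move=> /(_ ltac:(lra)) /(_ ltac:(apply/andP; split; lra)) h.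
rewrite (@Ex_ext _ _ _ _ _ (fun E => (nat_of_bool ((\sum_w (phiC n u v w E : nat))%:R <= M2 * (1 - g / 2)))%:R)); last first.
  by move=> E sE; rewrite /B3 uv codegE.
apply: (le_trans h); rewrite ler_expR /M2.
have X0 := ng_ge0; have p21 : p ^+ 2 <= 1 by rewrite expr2; nra.
have pX : 0 <= p ^+ 2 * (n%:R * g ^+ 2) by apply: mulr_ge0.
nra.
Qed.


Lemma bad_good E : E \subset U -> 1 - (bad E)%:R <= (@in_Gnp R p g n E : nat)%:R :> R.
Proof.
move=> sE; case/andP: hp => p0 p1; case/andP: hg => g0 g1.
case: (boolP (in_Gnp p g E)) => hG /=.
  by rewrite mulr1n gerBl ler0n.
rewrite mulr0n subr_le0.
have : (bad E != 0)%N.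
  apply/negP => /eqP hb; move/negP: hG; apply; move/eqP: hb.
  rewrite /bad addn_eq0 !sum_nat_eq0 => /andP[/forallP h12 /forallP h3].
  have nB1 v : ~~ B1 v E by move: (h12 v); case: (B1 v E).
  have nB2 v : ~~ B2 v E by move: (h12 v); case: (B2 v E); rewrite ?addn1.
  have nB3 u v : ~~ B3 u v E.
    by move: (h3 u); rewrite sum_nat_eq0 => /forallP/(_ v); case: (B3 u v E).
  have M10 : 0 <= M1 by apply: mulr_ge0 => //; exact: ler0n.
  have Dlo v : M1 * (1 - g) < #|nbhd E v|%:R by rewrite ltNge; exact: nB1.
  have Dhi v : #|nbhd E v|%:R < M1 * (1 + g / 3) by rewrite ltNge; exact: nB2.
  have Dpos v : 0 < #|nbhd E v|%:R :> R.
    by apply: le_lt_trans (Dlo v); apply: mulr_ge0 => //; lra.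
  rewrite /in_Gnp; apply/andP; split; apply/forallP => v.
    have := Dlo v; have := Dhi v; rewrite /M1 => h1 h2.
    have : 0 <= p * n%:R * g by apply: mulr_ge0 => //; exact: mulr_ge0.
    move=> h4; apply/andP; split; nra.
  apply/forallP => w.
  case: (eqVneq v w) => [->|vw].
    rewrite setIid divff ?gt_eqF ?Dpos //; nra.
  have hY : M2 * (1 - g / 2) < #|nbhd E v :&: nbhd E w|%:R.
    by move: (nB3 v w); rewrite /B3 vw /= -ltNge.
  rewrite ler_pdivlMr ?Dpos //.
  have := Dhi w; rewrite /M1 => h2; move: hY; rewrite /M2 => hY.
  have q0 : 0 <= p * (1 - g) by apply: mulr_ge0 => //; lra.
  have s1 : p * (1 - g) * #|nbhd E w|%:R <= p * (1 - g) * (p * n%:R * (1 + g / 3)).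
    by apply: ler_wpM2l => //; exact: ltW.
  have s2 : p * (1 - g) * (p * n%:R * (1 + g / 3)) <= p ^+ 2 * n%:R * (1 - g / 2).
    have pn0 : 0 <= p ^+ 2 * n%:R by apply: mulr_ge0; [exact: sqr_ge0 | exact: ler0n].
    have : (1 - g) * (1 + g / 3) <= 1 - g / 2 by nra.
    move=> h; have := ler_wpM2l pn0 h; rewrite expr2 => h'; nra.
  lra.
rewrite -lt0n => hb; rewrite -(ler_nat R) in hb; exact: hb.
Qed.

Lemma bound : 1 - (2 * n + n * n)%:R * e <= ER_prob p (@in_Gnp R p g n).
Proof.
rewrite ER_Ex.
have le1 := @Ex_le R T p hp U _ _ bad_good.
apply: le_trans le1; rewrite Ex_add Ex1 Ex_opp lerD2l lerN2.
rewrite (@Ex_ext _ _ _ _ _ (fun E => \sum_v ((B1 v E)%:R + (B2 v E)%:R) + \sum_u \sum_v (B3 u v E)%:R)); last first.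
  move=> E _; rewrite /bad natrD !natr_sum; congr (_ + _).
    by apply: eq_bigr => v _; rewrite natrD.
  by apply: eq_bigr => u _; rewrite natr_sum.
rewrite Ex_add !Ex_sum.
under eq_bigr do rewrite Ex_add.
under [X in _ + X <= _]eq_bigr do rewrite Ex_sum.
have h1 : \sum_(v < n) (Ex p U (fun E => (B1 v E)%:R) + Ex p U (fun E => (B2 v E)%:R)) <= \sum_(v < n) (e + e).
  by apply: ler_sum => v _; apply: lerD; [exact: EB1 | exact: EB2].
have h2 : \sum_(u < n) \sum_(v < n) Ex p U (fun E => (B3 u v E)%:R) <= \sum_(u < n) \sum_(v < n) e.
  by apply: ler_sum => u _; apply: ler_sum => v _; exact: EB3.
apply: le_trans (lerD h1 h2) _.
by rewrite !sumr_const !card_ord natrD mulrDl !mulr_natl !mulrnA mulr2n lexx.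
Qed.

End Bound.

Local Open Scope classical_set_scope.
Local Open Scope ring_scope.

Theorem lemma1 (R : realType) (p : R) (gamma : nat -> R)
  (hp : 0 <= p <= 1)
  (hgam : forall n, 0 <= gamma n <= 2^-1)
  (hgam_rate : (fun n : nat => gamma n / Num.sqrt (ln (n%:R : R) / n%:R)) @ \oo --> +oo)
  (hgam0 : gamma @ \oo --> 0) :
  exists theta : nat -> R, theta @ \oo --> 0 /\
    forall n : nat, ER_prob p (@in_Gnp R p (gamma n) n) >= 1 - theta n.
Proof.
case: (eqVneq p 0) => [p0|pn0].
  exists (fun _ => 0); split; first exact: cvg_cst.
  move=> n; rewrite subr0 p0.
  have nb0 : forall v, nbhd (finset.set0 : {set {set 'I_n}}) v = finset.set0.
    by move=> v; apply/setP => u; rewrite !inE.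
  have G0 : is_graph (finset.set0 : {set {set 'I_n}}) && @in_Gnp R 0 (gamma n) n finset.set0.
    rewrite /is_graph sub0set /in_Gnp /=; apply/andP; split; apply/forallP => v.
      by rewrite nb0 cards0 !mul0r lexx.
    by apply/forallP => w; rewrite !nb0 set0I cards0 !mul0r lexx.
  rewrite /ER_prob (bigD1 finset.set0) //=.
  rewrite /ER_weight cards0 expr0 subr0 expr1n mulr1 lerDl.
  apply: sumr_ge0 => E _; apply: mulr_ge0; apply: exprn_ge0 => //; lra.
exists (fun n => (2 * n + n * n)%:R * expR (2 - p ^+ 2 / 72 * n%:R * gamma n ^+ 2)).
split; last by move=> n; exact: bound.
case/andP: hp => p0' p1.
have p0 : 0 < p by rewrite lt_neqAle eq_sym pn0.
pose B := Num.sqrt (216 / p ^+ 2).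
have hB : \forall n \near \oo, B <= gamma n / Num.sqrt (ln (n%:R : R) / n%:R).
  by move: hgam_rate => /cvgryPge; apply.
pose C : R := 6 * expR 2.
have hh : (fun n => C * harmonic n) @ \oo --> (0 : R).
  rewrite -(mulr0 C); apply: cvgMr; exact: cvg_harmonic.
apply: (squeeze_cvgr _ (cvg_cst (0 : R)) hh).
near=> n.
have n2 : (2 <= n)%N by near: n; exact: nbhs_infty_ge.
have hBn : B <= gamma n / Num.sqrt (ln (n%:R : R) / n%:R) by near: n; exact: hB.
have := hgam n; move: hBn.
set g := gamma n; set N : R := n%:R => hBn /andP[g0 g1].
have N2 : 2 <= N by rewrite /N (ler_nat R 2 n).
have L0 : 0 < ln N by apply: ln_gt0; lra.
set L := ln N in L0 *.
have LN0 : 0 < L / N by apply: divr_gt0 => //; lra.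
have s0 : 0 < Num.sqrt (L / N) by rewrite sqrtr_gt0.
set s := Num.sqrt (L / N) in s0 hBn *.
have s2 : s ^+ 2 = L / N by rewrite /s sqr_sqrtr // ltW.
have B0 : 0 <= B by exact: sqrtr_ge0.
have B2 : B ^+ 2 = 216 / p ^+ 2 by rewrite /B sqr_sqrtr // divr_ge0 // sqr_ge0.
rewrite ler_pdivlMr // in hBn.
have g2 : 216 / p ^+ 2 * (L / N) <= g ^+ 2.
  rewrite -B2 -s2 -exprMn; have Bs0 : 0 <= B * s by apply: mulr_ge0 => //; exact: ltW.
  nra.
have X3 : 3 * L <= p ^+ 2 / 72 * N * g ^+ 2.
  have -> : 3 * L = p ^+ 2 / 72 * N * (216 / p ^+ 2 * (L / N)).
    by field; apply/andP; split; [lra | apply: lt0r_neq0].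
  apply: ler_wpM2l => //; apply: mulr_ge0; [| lra].
  by apply: divr_ge0 => //; exact: sqr_ge0.
have e3 : expR (3 * L) = N ^+ 3.
  by rewrite -[3]/(3%:R) expRM_natl /L lnK // posrE; lra.
have e2 : expR (2 - p ^+ 2 / 72 * N * g ^+ 2) <= expR 2 / N ^+ 3.
  rewrite -e3 -expRN -expRD ler_expR; lra.
have en : (n.+1%:R : R) = N + 1 by rewrite -addn1 natrD.
have eN : ((2 * n + n * n)%:R : R) = 2 * N + N * N by rewrite natrD !natrM.
rewrite /harmonic /= en eN.
have E0 := expR_gt0 (2 - p ^+ 2 / 72 * N * g ^+ 2).
have Q0 : 0 <= 2 * N + N * N by nra.
apply/andP; split; first by apply: mulr_ge0 => //; exact: ltW.
apply: (le_trans (ler_wpM2l Q0 e2)).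
have N3 : 0 < N ^+ 3 by apply: exprn_gt0; lra.
have key : (2 * N + N * N) * (N + 1) <= 6 * N ^+ 3 by rewrite !exprS expr0; nra.
have ee := expR_gt0 (2 : R).
rewrite /C mulrA ler_pdivrMr // mulrAC ler_pdivlMr; last lra.
have : expR 2 * ((2 * N + N * N) * (N + 1)) <= expR 2 * (6 * N ^+ 3) by apply: ler_wpM2l => //; exact: ltW.
move=> h; have -> : (2 * N + N * N) * expR 2 * (N + 1) = expR 2 * ((2 * N + N * N) * (N + 1)) by ring.
have -> : 6 * expR 2 * N ^+ 3 = expR 2 * (6 * N ^+ 3) by ring.
exact: h.
Unshelve. all: end_near.
Qed.
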